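(* Let $(B,\lfloor\cdot,\cdot\rfloor,\|\cdot\|)$ be an SSDB space with quadratic form $q$ and let $A\subset B$ be $q$-positive. The following are equivalent: (1) $A$ is maximally $q$-positive; (2) $A+C=B$ for every maximally $(-q)$-positive set $C\subset B$ such that $\Phi_{-q,C}$ is finite-valued; (3) there exist a set $C\subset B$ with $A+C=B$ and a point $p\in C$ such that $q(z-p)<0$ for all $z\in C\setminus\{p\}$.
   Context: An SSD space is a pair $(B,\lfloor\cdot,\cdot\rfloor)$ with $B$ a nonzero real vector space and $\lfloor\cdot,\cdot\rfloor$ a symmetric bilinear form; $q(b)=\frac12\lfloor b,b\rfloor$. An SSDB space is a triple $(B,\lfloor\cdot,\cdot\rfloor,\|\cdot\|)$ such that $(B,\lfloor\cdot,\cdot\rfloor)$ is an SSD space, $(B,\|\cdot\|)$ is a Banach space, and the map $i:B\to B^*$, $i(b)=\lfloor\cdot,b\rfloor$, is a surjective isometry onto the dual $B^*$. For a quadratic form $Q\in\{q,-q\}$ (note $-q$ is the quadratic form of the SSD space $(B,-\lfloor\cdot,\cdot\rfloor)$): a nonempty set $A$ is $Q$-positive if $Q(b-c)\ge0$ for all $b,c\in A$, and maximally $Q$-positive if it is $Q$-positive and not properly contained in another $Q$-positive set. For nonempty $C\subset B$, $\Phi_{-q,C}(x)=\sup_{c\in C}\{-\lfloor x,c\rfloor+q(c)\}$. *)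

(* Defs.v *)
From HB Require Import structures.
From mathcomp Require Import all_boot all_order all_algebra.
From mathcomp Require Import all_classical all_reals all_analysis.
Set Implicit Arguments. Unset Strict Implicit. Unset Printing Implicit Defensive.
Import Order.TTheory GRing.Theory Num.Theory.
Import numFieldNormedType.Exports.
Local Open Scope classical_set_scope.
Local Open Scope ring_scope.

Section SSDB.
Variables (R : realType) (B : completeNormedModType R).

Definition dual_elt (f : B -> R) : Prop :=
  (forall x y : B, f (x + y) = f x + f y) /\
  (forall (a : R) (x : B), f (a *: x) = a * f x) /\
  continuous f.

Definition dual_norm_is (f : B -> R) (c : R) : Prop :=
  (forall x : B, `|x| <= 1 -> `|f x| <= c) /\
  (forall e : R, 0 < e -> exists x : B, `|x| <= 1 /\ c - e < `|f x|).

(** SSD space: nonzero real vector space with a symmetric bilinear form;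
    SSDB: additionally Banach and b |-> bl . b is a surjective isometry onto B^* *)
Definition SSDB (bl : B -> B -> R) : Prop :=
  (exists b : B, b != 0) /\
  (forall b c : B, bl b c = bl c b) /\
  (forall x y c : B, bl (x + y) c = bl x c + bl y c) /\
  (forall (a : R) (x c : B), bl (a *: x) c = a * bl x c) /\
  (forall b : B, dual_elt (fun x => bl x b) /\ dual_norm_is (fun x => bl x b) `|b|) /\
  (forall f : B -> R, dual_elt f -> exists b : B, forall x, f x = bl x b).

Definition qf (bl : B -> B -> R) (b : B) : R := bl b b / 2.

Definition Qpositive (Q : B -> R) (A : set B) : Prop :=
  A !=set0 /\ (forall b c : B, A b -> A c -> 0 <= Q (b - c)).

Definition maxQpositive (Q : B -> R) (A : set B) : Prop :=
  Qpositive Q A /\ (forall A' : set B, Qpositive Q A' -> A `<=` A' -> A' = A).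

Definition Phi_mq (bl : B -> B -> R) (C : set B) (x : B) : \bar R :=
  ereal_sup [set ((- bl x c + qf bl c)%:E) | c in C].

Definition setsum (A C : set B) : set B := [set a + c | a in A & c in C].

End SSDB.

(* Main.v *)
Require Import Defs.
From HB Require Import structures.
From mathcomp Require Import all_boot all_order all_algebra.
From mathcomp Require Import all_classical all_reals all_analysis.
From mathcomp Require Import ring lra.
Import Order.TTheory GRing.Theory Num.Theory.
Import numFieldNormedType.Exports.
Local Open Scope classical_set_scope.
Local Open Scope ring_scope.

Definition PG (R : realType) (V : lmodType R) (Gam : set (V * R)) (G : set (V * R)) :=
  [/\ (forall x1 a1 x2 a2, G (x1, a1) -> G (x2, a2) -> G (x1 + x2, a1 + a2)),
      (forall k x a, G (x, a) -> G (k *: x, k * a)),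
      (forall x a b, G (x, a) -> G (x, b) -> a = b) &
      (forall x a r, G (x, a) -> Gam (x, r) -> a <= r)].

Arguments PG {R V}.

Lemma PG_chain (R : realType) (V : lmodType R) (Gam : set (V * R)) :
  forall F : set (set (V * R)), F `<=` PG Gam -> total_on F subset ->
    PG Gam (\bigcup_(X in F) X).
Proof.
move=> F FP tot; split.
- move=> x1 a1 x2 a2 [X1 FX1 h1] [X2 FX2 h2].
  have [s12|s21] := tot _ _ FX1 FX2.
  + have [hD _ _ _] := FP _ FX2; exists X2 => //; apply: hD => //; exact: s12.
  + have [hD _ _ _] := FP _ FX1; exists X1 => //; apply: hD => //; exact: s21.
- move=> k x a [X FX h]; have [_ hZ _ _] := FP _ FX; exists X => //; exact: hZ.
- move=> x a b [X1 FX1 h1] [X2 FX2 h2].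
  have [s12|s21] := tot _ _ FX1 FX2.
  + have [_ _ hF _] := FP _ FX2; exact: hF (s12 _ h1) h2.
  + have [_ _ hF _] := FP _ FX1; exact: hF h1 (s21 _ h2).
- move=> x a r [X FX h]; have [_ _ _ hM] := FP _ FX; exact: hM.
Qed.

Lemma PG_key (R : realType) (V : lmodType R) (Gam G : set (V * R)) (v : V) :
  PG Gam G ->
  (forall x1 r1 x2 r2 l, Gam (x1,r1) -> Gam (x2,r2) -> 0 <= l -> l <= 1 ->
      Gam (l *: x1 + (1-l) *: x2, l*r1 + (1-l)*r2)) ->
  forall m1 a1 t r1 m2 a2 s r2, G (m1, a1) -> 0 < t -> Gam (m1 + t *: v, r1) ->
    G (m2, a2) -> 0 < s -> Gam (m2 - s *: v, r2) ->
    t * (a2 - r2) <= s * (r1 - a1).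
Proof.
move=> [hD hZ hF hM] Gconv m1 a1 t r1 m2 a2 s r2 G1 t0 g1 G2 s0 g2.
have st0 : 0 < s + t by rewrite addr_gt0.
pose l := s / (s + t).
have l0 : 0 <= l by rewrite /l divr_ge0 // ltW.
have l1 : l <= 1 by rewrite /l ler_pdivrMr // mul1r lerDl ltW.
have := Gconv _ _ _ _ l g1 g2 l0 l1.
have e : l * t = (1 - l) * s by rewrite /l; field; rewrite lt0r_neq0.
rewrite scalerDr scalerBr !scalerA e -addrA (addrC ((_ * s) *: v)) subrK => gg.
have GG := hD _ _ _ _ (hZ l _ _ G1) (hZ (1 - l) _ _ G2).
have := hM _ _ _ GG gg.
have -> : l * a1 + (1 - l) * a2 = (s * a1 + t * a2) / (s + t).
  by rewrite /l; field; rewrite lt0r_neq0.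
have -> : l * r1 + (1 - l) * r2 = (s * r1 + t * r2) / (s + t).
  by rewrite /l; field; rewrite lt0r_neq0.
rewrite ler_pM2r ?invr_gt0 //.
lra.
Qed.

Lemma divle (R : realType) (s t x y : R) : 0 < s -> 0 < t -> t * x <= s * y -> x / s <= y / t.
Proof. move=> s0 t0 h. rewrite ler_pdivrMr // mulrAC ler_pdivlMr // mulrC (mulrC y). done. Qed.

Lemma PG_ext (R : realType) (V : lmodType R) (Gam G : set (V * R)) (v : V) :
  PG Gam G -> G (0, 0) ->
  (forall x1 r1 x2 r2 l, Gam (x1,r1) -> Gam (x2,r2) -> 0 <= l -> l <= 1 ->
      Gam (l *: x1 + (1-l) *: x2, l*r1 + (1-l)*r2)) ->
  (forall x, exists r, Gam (x, r)) ->
  (forall a, ~ G (v, a)) ->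
  exists G', PG Gam G' /\ G `<` G'.
Proof.
move=> PGG G00 Gconv Gtot nv.
have key := @PG_key _ _ _ _ v PGG Gconv.
have [hD hZ hF hM] := PGG.
pose L := [set y | exists m a s r, [/\ G (m,a), 0 < s, Gam (m - s *: v, r) & y = (a - r) / s]].
have [rm grm] := Gtot (0 - 1 *: v).
have [rp grp] := Gtot (0 + 1 *: v).
have ubL : forall m1 a1 t r1, G (m1, a1) -> 0 < t -> Gam (m1 + t *: v, r1) ->
    ubound L ((r1 - a1) / t).
  move=> m1 a1 t r1 G1 t0 g1 y [m2 [a2 [s [r2 [G2 s0 g2 ->]]]]].
  apply: divle => //; exact: key g1 G2 s0 g2.
have hsL : has_sup L.
  split; first by exists ((0 - rm) / 1), 0, 0, 1, rm.
  by exists ((rp - 0) / 1); apply: (ubL 0 0 1 rp).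
pose c := sup L.
have lc : forall m a s r, G (m,a) -> 0 < s -> Gam (m - s *: v, r) -> a - s * c <= r.
  move=> m a s r Gm s0 g.
  have : (a - r) / s <= c by apply: sup_upper_bound => //; exists m, a, s, r.
  rewrite ler_pdivrMr // => h; nra.
have uc : forall m a t r, G (m,a) -> 0 < t -> Gam (m + t *: v, r) -> a + t * c <= r.
  move=> m a t r Gm t0 g.
  have : c <= (r - a) / t by apply: ge_sup; [case: hsL|exact: (ubL m a t r)].
  rewrite ler_pdivlMr // => h; nra.
pose G' := [set p | exists m a t, G (m,a) /\ p = (m + t *: v, a + t * c)].
exists G'; split; last first.
  split.
    move=> [x a] Gxa; exists x, a, 0; split => //.
    by rewrite scale0r addr0 mul0r addr0.
  move=> sub; apply: (nv c); apply: sub.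
  by exists 0, 0, 1; rewrite add0r scale1r add0r mul1r.
split.
- move=> x1 a1 x2 a2 [m1 [b1 [t1 [G1 [-> ->]]]]] [m2 [b2 [t2 [G2 [-> ->]]]]].
  exists (m1 + m2), (b1 + b2), (t1 + t2); split; first exact: hD.
  congr pair; first by rewrite scalerDl addrACA.
  by rewrite mulrDl addrACA.
- move=> k x a [m [b [t [Gm [-> ->]]]]].
  exists (k *: m), (k * b), (k * t); split; first exact: hZ.
  by rewrite scalerDr scalerA mulrDr mulrA.
- move=> x a b [m1 [b1 [t1 [G1 [e1 ->]]]]] [m2 [b2 [t2 [G2 [e2 ->]]]]].
  rewrite e1 in e2.
  have [tt|tn] := eqVneq t1 t2.
    rewrite tt in e2 *; move/addIr: e2 => mm; rewrite mm in G1.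
    by rewrite (hF _ _ _ G1 G2).
  exfalso; apply: (nv ((t1 - t2)^-1 * (b2 - b1))).
  have -> : v = (t1 - t2)^-1 *: (m2 - m1).
    apply: (@scalerI _ _ (t1 - t2)); first by rewrite subr_eq0.
    rewrite scalerA mulfV ?subr_eq0 // scale1r scalerBl.
    have -> : m2 = m1 + t1 *: v - t2 *: v by rewrite e2 addrK.
    by rewrite -[m1 + _ - _]addrA (addrC m1) addrK.
  apply: (hZ); have := hD _ _ _ _ G2 (hZ (-1) _ _ G1).
  by rewrite scaleN1r mulN1r.
- move=> x a r [m [b [t [Gm [-> ->]]]]] g.
  have [t0|t0|t0] := ltgtP t 0.
  + have := lc m b (- t) r Gm; rewrite oppr_gt0 scaleNr opprK mulNr opprK => h.
    exact: h t0 g.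
  + exact: uc Gm t0 g.
  + move: g; rewrite t0 scale0r addr0 mul0r addr0; exact: hM.
Qed.

Lemma HB_convex (R : realType) (V : lmodType R) (Gam : set (V * R)) :
  (forall x1 r1 x2 r2 l, Gam (x1,r1) -> Gam (x2,r2) -> 0 <= l -> l <= 1 ->
      Gam (l *: x1 + (1-l) *: x2, l*r1 + (1-l)*r2)) ->
  (forall x, exists r, Gam (x, r)) ->
  (forall r, Gam (0, r) -> 0 <= r) ->
  exists phi : V -> R, [/\ (forall x y, phi (x + y) = phi x + phi y),
     (forall a x, phi (a *: x) = a * phi x) &
     (forall x r, Gam (x, r) -> phi x <= r)].
Proof.
move=> Gconv Gtot G0.
have [A [PA maxA]] := Zorn_bigcup (@PG_chain R V Gam).
have [hD hZ hF hM] := PA.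
have A00 : A (0, 0).
  apply: contrapT => nA.
  have Aempty : forall p, ~ A p.
    move=> [x a] Ap; apply: nA; have := hZ 0 _ _ Ap; by rewrite scale0r mul0r.
  apply: (maxA [set (0 : V, 0 : R)]).
    split; first by move=> p /Aempty.
    by move=> sub; apply: nA; exact: sub.
  split.
  - by move=> x1 a1 x2 a2 [-> ->] [-> ->]; rewrite !addr0.
  - by move=> k x a [-> ->]; rewrite scaler0 mulr0.
  - by move=> x a b [_ ->] [_ ->].
  - by move=> x a r [-> ->]; exact: G0.
have tot : forall v, exists a, A (v, a).
  move=> v; apply: contrapT => nv.
  have nv' : forall a, ~ A (v, a) by move=> a Ava; apply: nv; exists a.
  have [G' [PG' AG']] := @PG_ext _ _ _ _ v PA A00 Gconv Gtot nv'.
  exact: maxA AG' PG'.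
pose phi x := xget 0 [set a | A (x, a)].
have Aphi : forall x, A (x, phi x) by move=> x; apply: (@xgetPex R 0 [set a | A (x, a)]); exact: tot.
exists phi; split.
- by move=> x y; apply: (hF (x + y)); [exact: Aphi|exact: hD].
- by move=> a x; apply: (hF (a *: x)); [exact: Aphi|exact: hZ].
- move=> x r g; exact: hM (Aphi x) g.
Qed.


Set Implicit Arguments.
Section basics.
Lemma ssd_sym (R : realType) (B : completeNormedModType R) (bl : B -> B -> R)
  (hB : SSDB bl) b c : bl b c = bl c b.
Proof. by case: hB => _ [h _]. Qed.
Lemma ssd_Dl (R : realType) (B : completeNormedModType R) (bl : B -> B -> R)
  (hB : SSDB bl) x y c : bl (x + y) c = bl x c + bl y c.
Proof. by case: hB => _ [_ [h _]]. Qed.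
Lemma ssd_Zl (R : realType) (B : completeNormedModType R) (bl : B -> B -> R)
  (hB : SSDB bl) (a : R) x c : bl (a *: x) c = a * bl x c.
Proof. by case: hB => _ [_ [_ [h _]]]. Qed.
Lemma ssd_dual (R : realType) (B : completeNormedModType R) (bl : B -> B -> R)
  (hB : SSDB bl) b : dual_elt (fun x => bl x b) /\ dual_norm_is (fun x => bl x b) `|b|.
Proof. by case: hB => _ [_ [_ [_ [h _]]]]. Qed.
Lemma ssd_surj (R : realType) (B : completeNormedModType R) (bl : B -> B -> R)
  (hB : SSDB bl) f : dual_elt f -> exists b : B, forall x, f x = bl x b.
Proof. by case: hB => _ [_ [_ [_ [_ h]]]]; apply: h. Qed.
End basics.

Section lemmas.
Variables (R : realType) (B : completeNormedModType R) (bl : B -> B -> R).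
Hypothesis hB : SSDB bl.

Lemma ssd_Dr x y c : bl c (x + y) = bl c x + bl c y.
Proof. by rewrite !(ssd_sym hB c) ssd_Dl. Qed.
Lemma ssd_Zr (a : R) x c : bl c (a *: x) = a * bl c x.
Proof. by rewrite !(ssd_sym hB c) ssd_Zl. Qed.
Lemma ssd_0l c : bl 0 c = 0.
Proof. by rewrite -(scale0r (0 : B)) ssd_Zl // mul0r. Qed.
Lemma ssd_0r c : bl c 0 = 0.
Proof. by rewrite ssd_sym // ssd_0l. Qed.
Lemma ssd_Nl x c : bl (- x) c = - bl x c.
Proof. by rewrite -scaleN1r ssd_Zl // mulN1r. Qed.
Lemma ssd_Nr x c : bl c (- x) = - bl c x.
Proof. by rewrite !(ssd_sym hB c) ssd_Nl. Qed.
Lemma ssd_Bl x y c : bl (x - y) c = bl x c - bl y c.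
Proof. by rewrite ssd_Dl // ssd_Nl. Qed.
Lemma ssd_Br x y c : bl c (x - y) = bl c x - bl c y.
Proof. by rewrite ssd_Dr ssd_Nr. Qed.

Lemma qfD x y : qf bl (x + y) = qf bl x + bl x y + qf bl y.
Proof.
rewrite /qf ssd_Dl // !ssd_Dr (ssd_sym hB y x).
by field.
Qed.
Lemma qfN x : qf bl (- x) = qf bl x.
Proof. by rewrite /qf ssd_Nl ssd_Nr opprK. Qed.
Lemma qfB x y : qf bl (x - y) = qf bl x - bl x y + qf bl y.
Proof. by rewrite qfD ssd_Nr qfN. Qed.
Lemma qf0 : qf bl 0 = 0.
Proof. by rewrite /qf ssd_0l mul0r. Qed.

Lemma ssd_bound x b : `|bl x b| <= `|x| * `|b|.
Proof.
have [->|x0] := eqVneq x 0; first by rewrite ssd_0l normr0 normr0 mul0r.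
have [_ [h _]] := ssd_dual hB b.
have := h (`|x|^-1 *: x); rewrite normfZV // lexx ssd_Zl // normrM => /(_ isT).
rewrite normfV normr_id ler_pdivrMl ?normr_gt0 //.
Qed.

Lemma qf_bound b : `|qf bl b| <= `|b| ^+ 2 / 2.
Proof.
rewrite /qf normrM [`|2^-1|]ger0_norm ?invr_ge0 ?ler0n //.
have := ssd_bound b b; rewrite -expr2 => h.
by rewrite ler_pM2r // invr_gt0 ltr0n.
Qed.

Lemma qf_lb b : - (`|b| ^+ 2 / 2) <= qf bl b.
Proof. by have := qf_bound b; rewrite ler_norml => /andP[]. Qed.
Lemma qf_ub b : qf bl b <= `|b| ^+ 2 / 2.
Proof. by have := qf_bound b; rewrite ler_norml => /andP[]. Qed.

Lemma ssd_supnorm u (K : R) : (forall y, bl y u - `|y| ^+ 2 / 2 <= K) -> `|u| ^+ 2 / 2 <= K.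
Proof.
move=> hK.
have [u0|u0] := eqVneq `|u| 0.
  by rewrite u0 expr0n /= mul0r; have := hK 0; rewrite ssd_0l normr0 expr0n /= mul0r subr0.
have up : 0 < `|u| by rewrite lt0r u0 normr_ge0.
apply/ler_addgt0Pr => e e0.
have [_ [_ h]] := ssd_dual hB u.
have [y1 [y11 hy1]] := h (e / `|u|) (divr_gt0 e0 up).
pose sg : R := if 0 <= bl y1 u then 1 else -1.
have hsg : sg * bl y1 u = `|bl y1 u|.
  rewrite /sg; case: ifP => hb; first by rewrite mul1r ger0_norm.
  by rewrite mulN1r ltr0_norm // ltNge hb.
have nsg : `|sg| = 1 by rewrite /sg; case: ifP => _; rewrite ?normrN normr1.
have := hK ((`|u| * sg) *: y1).
rewrite ssd_Zl // -mulrA hsg normrZ normrM nsg mulr1 ger0_norm ?normr_ge0 // => hh.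
have hb : `|u| - e / `|u| <= `|bl y1 u| by apply: ltW.
have ny : 0 <= `|y1| by apply: normr_ge0.
have e1 : `|u| * (e / `|u|) = e by rewrite mulrC divfK.
have : `|u| * (`|u| - e / `|u|) <= `|u| * `|bl y1 u| by rewrite ler_pM2l.
rewrite mulrBr e1 => h2.
have : (`|u| * `|y1|) ^+ 2 <= `|u| ^+ 2.
  by rewrite exprMn ler_piMr ?exprn_ge0 ?normr_ge0 // expr_le1.
nra.
Qed.


Lemma lin_cont (phi : B -> R) (d K : R) :
  (forall x y, phi (x + y) = phi x + phi y) ->
  (forall (a : R) x, phi (a *: x) = a * phi x) ->
  0 < d -> (forall h, `|h| < d -> `|phi h| <= K) -> continuous phi.
Proof.
move=> pD pZ d0 hK.
have K0 : 0 <= K.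
  have := hK 0; rewrite normr0 => /(_ d0).
  have -> : phi 0 = 0 by rewrite -(scale0r (0:B)) pZ mul0r.
  by rewrite normr0.
have pB : forall x y, phi (x - y) = phi x - phi y.
  by move=> x y; rewrite pD -scaleN1r pZ mulN1r.
move=> x; apply/cvgrPdist_lt => e e0; apply/nbhs_normP.
have K1 : 0 < K + 1 by rewrite ltr_wpDl.
pose la := e / (K + 1).
have la0 : 0 < la by rewrite divr_gt0.
exists (d * la); first by apply: mulr_gt0.
move=> t /=; rewrite /ball_ /= => hxt.
rewrite -pB.
have := hK (la^-1 *: (x - t)).
rewrite normrZ gtr0_norm ?invr_gt0 // pZ normrM gtr0_norm ?invr_gt0 //.
rewrite ltr_pdivrMl // mulrC => /(_ hxt).
rewrite ler_pdivrMl // => h.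
apply: (le_lt_trans h).
rewrite /la mulrAC ltr_pdivrMr // ltr_pM2l //.
by rewrite ltrDl.
Qed.

Lemma bl_cont b : continuous (fun x => bl x b).
Proof. by have [[_ [_ h]] _] := ssd_dual hB b. Qed.

Lemma sandwich (E : set (B * R)) (g : B -> R) :
  (forall y1 s1 y2 s2 l, E (y1, s1) -> E (y2, s2) -> 0 <= l -> l <= 1 ->
      E (l *: y1 + (1 - l) *: y2, l * s1 + (1 - l) * s2)) ->
  (exists y0 s0, E (y0, s0)) ->
  (forall a b l, 0 <= l -> l <= 1 -> g (l *: a + (1 - l) *: b) <= l * g a + (1 - l) * g b) ->
  (exists w (d M : R), 0 < d /\ forall z, `|z - w| < d -> g z <= M) ->
  (forall y s, E (y, s) -> 0 <= s + g y) ->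
  exists c, forall y s z, E (y, s) -> bl y c - bl z c <= s + g z.
Proof.
move=> Econv [y0 [s0 Ey0]] gconv [w [d [M [d0 hM]]]] Epos.
pose Gam := [set p : B * R | exists y s, E (y, s) /\ s + g (y - p.1) <= p.2].
have [phi [pD pZ pM]] : exists phi : B -> R, [/\ (forall x y, phi (x + y) = phi x + phi y),
     (forall a x, phi (a *: x) = a * phi x) &
     (forall x r, Gam (x, r) -> phi x <= r)].
  apply: HB_convex.
  - move=> x1 r1 x2 r2 l [y1 [s1 [E1 h1]]] [y2 [s2 [E2 h2]]] l0 l1.
    exists (l *: y1 + (1 - l) *: y2), (l * s1 + (1 - l) * s2); split.
      exact: Econv.
    rewrite /=.
    have -> : l *: y1 + (1 - l) *: y2 - (l *: x1 + (1 - l) *: x2) =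
        l *: (y1 - x1) + (1 - l) *: (y2 - x2).
      by rewrite !scalerBr opprD addrACA.
    have := gconv (y1 - x1) (y2 - x2) l l0 l1.
    move: h1 h2 => /= h1 h2.
    have l1' : 0 <= 1 - l by rewrite subr_ge0.
    nra.
  - by move=> x; exists (s0 + g (y0 - x)), y0, s0.
  - move=> r [y [s [Ey /=]]]; rewrite subr0 => h.
    exact: le_trans (Epos _ _ Ey) h.
have pB : forall x y, phi (x - y) = phi x - phi y.
  by move=> x y; rewrite pD -scaleN1r pZ mulN1r.
have pN : forall x, phi (- x) = - phi x.
  by move=> x; rewrite -scaleN1r pZ mulN1r.
pose x0 := y0 - w.
pose K := s0 + M - phi x0.
have bnd : forall h, `|h| < d -> - phi h <= K.
  move=> h hd.
  have : Gam (x0 - h, s0 + g (y0 - (x0 - h))) by exists y0, s0.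
  move/pM; rewrite pB.
  have -> : y0 - (x0 - h) = h + w by rewrite /x0 opprB addrCA opprB [y0 + (w - y0)]addrCA subrr addr0.
  have := hM (h + w); rewrite addrK => /(_ hd) hg.
  rewrite /K; lra.
have hc : continuous phi.
  apply: (@lin_cont phi d K pD pZ d0) => h hd.
  rewrite ler_norml; apply/andP; split.
    by rewrite lerNl; exact: bnd.
  by rewrite -[phi h]opprK -pN; apply: bnd; rewrite normrN.
have [c hcp] := ssd_surj hB (conj pD (conj pZ hc)).
exists c => y s z Ey.
rewrite -!hcp -pB.
apply: pM; exists y, s; split => //=.
by rewrite opprB addrCA subrr addr0.
Qed.

End lemmas.

Set Implicit Arguments. Unset Strict Implicit.

Definition maxprop (R : realType) (B : completeNormedModType R) (Q : B -> R) (A : set B) :=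
  Qpositive Q A /\ forall b, (forall a, A a -> 0 <= Q (b - a)) -> A b.

Lemma max_to_prop (R : realType) (B : completeNormedModType R) (Q : B -> R) (A : set B) :
  (forall x, Q (- x) = Q x) -> Q 0 = 0 -> maxQpositive Q A -> maxprop Q A.
Proof.
move=> QN Q0 [[A0 Apos] Amax]; split; first by [].
move=> b hb.
have e : A `|` [set b] = A.
  apply: Amax; last by move=> x Ax; left.
  split; first by case: A0 => a Aa; exists a; left.
  move=> x y [Ax|->] [Ay|->].
  - exact: Apos.
  - by rewrite -QN opprB; apply: hb.
  - exact: hb.
  - by rewrite subrr Q0.
have : (A `|` [set b]) b by right.
by rewrite e.
Qed.

Lemma prop_to_max (R : realType) (B : completeNormedModType R) (Q : B -> R) (A : set B) :
  maxprop Q A -> maxQpositive Q A.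
Proof.
move=> [[A0 Apos] Amax]; split; first by [].
move=> A' [_ A'pos] sub; apply/seteqP; split; last by [].
move=> x A'x; apply: Amax => a Aa; apply: A'pos => //; exact: sub.
Qed.

Section core.
Variables (R : realType) (B : completeNormedModType R) (bl : B -> B -> R).
Hypothesis hB : SSDB bl.

Local Notation q := (qf bl).

Lemma bl_self x : bl x x = 2 * q x.
Proof. by rewrite /q /qf; field. Qed.

Lemma three_to_one (A C : set B) (p : B) :
  Qpositive q A -> setsum A C = setT -> C p ->
  (forall z, C z -> z <> p -> q (z - p) < 0) -> maxprop q A.
Proof.
move=> Apos sAC Cp strict; split => // b hb.
have : setsum A C (b + p) by rewrite sAC.
move=> [a Aa [c Cc e]].
have [cp|cp] := eqVneq c p.
  by move: e; rewrite cp => /addIr <-.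
have e' : c - p = b - a.
  have -> : c = b + p - a by rewrite -e [a + c]addrC addrK.
  by rewrite addrAC addrK.
have := strict c Cc (elimN eqP cp); rewrite e'.
by move/lt_le_trans => /(_ _ (hb a Aa)); rewrite ltxx.
Qed.


Lemma sqn_conv (a b : B) (l : R) : 0 <= l -> l <= 1 ->
  `|l *: a + (1 - l) *: b| ^+ 2 / 2 <= l * (`|a| ^+ 2 / 2) + (1 - l) * (`|b| ^+ 2 / 2).
Proof.
move=> l0 l1.
have l1' : 0 <= 1 - l by rewrite subr_ge0.
have h : `|l *: a + (1 - l) *: b| <= l * `|a| + (1 - l) * `|b|.
  apply: (le_trans (ler_normD _ _)).
  by rewrite !normrZ (ger0_norm l0) (ger0_norm l1').
have n0 : 0 <= `|l *: a + (1 - l) *: b| by apply: normr_ge0.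
have na : 0 <= `|a| by apply: normr_ge0.
have nb : 0 <= `|b| by apply: normr_ge0.
have h2 : `|l *: a + (1 - l) *: b| ^+ 2 <= (l * `|a| + (1 - l) * `|b|) ^+ 2.
  by rewrite lerXn2r // ?nnegrE // addr_ge0 // mulr_ge0.
have h3 : 0 <= l * (1 - l) * (`|a| - `|b|) ^+ 2 by apply: mulr_ge0; [apply: mulr_ge0|apply: sqr_ge0].
have e : (l * `|a| + (1 - l) * `|b|) ^+ 2 = l * `|a| ^+ 2 + (1 - l) * `|b| ^+ 2 - l * (1 - l) * (`|a| - `|b|) ^+ 2.
  by ring.
rewrite e in h2.
lra.
Qed.

Definition C0 := [set b : B | q b + `|b| ^+ 2 / 2 = 0].
Definition C0' := [set b : B | q b = `|b| ^+ 2 / 2].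

Lemma decomp x : exists w, C0 (x - w) /\ C0' w.
Proof.
pose f y := `|y| ^+ 2 / 2 + bl x y - q x.
pose g z := `|x - z| ^+ 2 / 2.
have [c hc] : exists c, forall y s z, [set p | f p.1 <= p.2] (y, s) -> bl y c - bl z c <= s + g z.
  apply: (@sandwich R B bl hB [set p | f p.1 <= p.2] g).
  - move=> y1 s1 y2 s2 l /= h1 h2 l0 l1.
    have l1' : 0 <= 1 - l by rewrite subr_ge0.
    rewrite /f (ssd_Dr hB) !(ssd_Zr hB).
    have := sqn_conv y1 y2 l0 l1.
    move: h1 h2; rewrite /f => h1 h2.
    have := ler_wpM2l l0 h1; have := ler_wpM2l l1' h2.
    lra.
  - by exists 0, (f 0); rewrite /= lexx.
  - move=> a b l l0 l1; rewrite /g.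
    have -> : x - (l *: a + (1 - l) *: b) = l *: (x - a) + (1 - l) *: (x - b).
      by rewrite !scalerBr addrACA -scalerDl subrKC scale1r opprD.
    exact: sqn_conv.
  - exists x, 1, (1 / 2); split => // z hz; rewrite /g distrC.
    rewrite ler_pM2r ?invr_gt0 ?ltr0n // expr_le1 ?normr_ge0 //; exact: ltW.
  - move=> y s /= hs.
    have := qfB hB x y; have := qf_lb hB y; have := qf_ub hB (x - y).
    move: hs; rewrite /f /g; lra.
have h1 : forall t, `|c - x| ^+ 2 / 2 <= bl x c - q x - (bl t c - `|t| ^+ 2 / 2).
  move=> t; apply: (ssd_supnorm hB) => y.
  have := hc y (f y) (x - t) (lexx _).
  rewrite /g /f opprB addrCA subrr addr0 (ssd_Bl hB) (ssd_Br hB) (ssd_sym hB y x).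
  lra.
have h2 : `|c| ^+ 2 / 2 <= bl x c - q x - `|c - x| ^+ 2 / 2.
  apply: (ssd_supnorm hB) => t; have := h1 t; lra.
exists c; rewrite /C0 /C0' /=.
have := qfB hB x c; have := qf_lb hB (x - c); have := qf_ub hB c.
rewrite distrC in h2.
move=> u1 u2 u3; split; lra.
Qed.

Lemma C0_0 : C0 0.
Proof. by rewrite /C0 /= (qf0 hB) normr0 expr0n /= mul0r addr0. Qed.

Lemma C0_max : maxprop (fun b => - q b) C0.
Proof.
split.
  split; first by exists 0; exact: C0_0.
  move=> b c; rewrite /C0 /= => hb hc.
  rewrite (qfB hB) oppr_ge0.
  have := ssd_bound hB b c; rewrite ler_norml => /andP[h1 h2].
  have : 0 <= (`|b| - `|c|) ^+ 2 by apply: sqr_ge0.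
  nra.
move=> b hb.
have [w [hw1 hw2]] := decomp b.
have := hb _ hw1; rewrite opprB addrCA subrr addr0 hw2 oppr_ge0 => h.
have w0 : w = 0.
  apply: normr0_eq0; apply/eqP; rewrite -sqrf_eq0; apply/eqP.
  apply: le_anti; rewrite sqr_ge0 andbT; lra.
by move: hw1; rewrite w0 subr0.
Qed.

Lemma C0_strict z : C0 z -> z <> 0 -> q (z - 0) < 0.
Proof.
rewrite /C0 /= subr0 => hz z0.
have : 0 < `|z| by rewrite normr_gt0; apply/eqP.
move=> zp; have : 0 < `|z| ^+ 2 by rewrite exprn_gt0.
lra.
Qed.

Lemma C0_fin x : Phi_mq bl C0 x \is a fin_num.
Proof.
rewrite fin_numElt; apply/andP; split.
  apply: (@lt_le_trans _ _ 0%E); first exact: ltNyr.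
  apply: ereal_sup_ubound; exists 0; first exact: C0_0.
  by rewrite (ssd_0r hB) (qf0 hB) oppr0 addr0.
apply: (@le_lt_trans _ _ (`|x| ^+ 2 / 2)%:E); last exact: ltry.
apply: ge_ereal_sup => _ [c hc <-]; rewrite lee_fin.
move: hc; rewrite /C0 /= => hc.
have := ssd_bound hB x c; rewrite ler_norml => /andP[h1 h2].
have : 0 <= (`|x| - `|c|) ^+ 2 by apply: sqr_ge0.
nra.
Qed.

Lemma core0 (A C : set B) : maxprop q A -> maxprop (fun b => - q b) C ->
  (forall x, Phi_mq bl C x \is a fin_num) -> exists c0, A c0 /\ C (- c0).
Proof.
move=> [[A0 Apos] Amax] [[C0n Cpos] Cmax] hfin.
pose g z := fine (Phi_mq bl C (- z)).
have gi : forall z c, C c -> bl z c + q c <= g z.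
  move=> z c Cc; rewrite -lee_fin /g fineK //.
  apply: ereal_sup_ubound; exists c => //.
  by rewrite (ssd_Nl hB) opprK.
have gii : forall z K, (forall c, C c -> bl z c + q c <= K) -> g z <= K.
  move=> z K hK; rewrite -lee_fin /g fineK //.
  apply: ge_ereal_sup => _ [c Cc <-]; rewrite lee_fin (ssd_Nl hB) opprK.
  exact: hK.
have gball : exists w (d M : R), 0 < d /\ forall z, `|z - w| < d -> g z <= M.
  pose O (n : nat) := \bigcup_(c in C) [set z | n%:R < bl z c + q c].
  have Oopen : forall n, open (O n).
    move=> n; apply: bigcup_open => c _.
    have -> : [set z | n%:R < bl z c + q c] =
       (fun z => bl z c + q c) @^-1` [set y | n%:R < y] by [].
    apply: open_comp; last exact: open_gt.
    move=> z _; apply: cvgD; [exact: (bl_cont hB) | exact: cvg_cst].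
  case: (pselect (exists n, ~ dense (O n))) => [[n nd]|alld].
    have [U0 [[x0 ox0] dis]] := denseNE nd.
    have := open_nbhs_nbhs ox0; move/nbhs_normP => [e e0 he].
    exists x0, e, n%:R; split => // z hz.
    have O0z : U0 z by apply: he; rewrite /ball_ /= distrC.
    apply: gii => c Cc; rewrite leNgt; apply/negP => hlt.
    have : (U0 `&` O n) z by split => //; exists c.
    by rewrite dis.
  have dO : forall n, open (O n) /\ dense (O n).
    move=> n; split => //; apply: contrapT => nd; apply: alld; by exists n.
  have [a [_ Ia]] : exists a, (setT `&` \bigcap_i O i) a.
    apply: (Baire dO); last exact: openT.
    by exists 0.
  exfalso.
  have [c Cc hc] := Ia (Num.truncn (g a)).+1 I.
  have := gi a c Cc; have := truncnS_gt (g a).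
  move: hc => /= hc; lra.
pose E := [set p : B * R | forall a, A a -> bl p.1 a - q a <= p.2].
have EA : forall a, A a -> E (a, q a).
  move=> a Aa a' Aa' /=; have := Apos _ _ Aa Aa'; rewrite (qfB hB); lra.
have [c0 hc] : exists c0, forall y s z, E (y, s) -> bl y c0 - bl z c0 <= s + g z.
  apply: (@sandwich R B bl hB E g).
  - move=> y1 s1 y2 s2 l h1 h2 l0 l1 a Aa /=.
    have l1' : 0 <= 1 - l by rewrite subr_ge0.
    rewrite (ssd_Dl hB) !(ssd_Zl hB).
    have := ler_wpM2l l0 (h1 a Aa); have := ler_wpM2l l1' (h2 a Aa).
    rewrite /=; lra.
  - by case: A0 => a0 Aa0; exists a0, (q a0); exact: EA.
  - move=> a b l l0 l1; apply: gii => c Cc.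
    have l1' : 0 <= 1 - l by rewrite subr_ge0.
    rewrite (ssd_Dl hB) !(ssd_Zl hB).
    have := ler_wpM2l l0 (gi a c Cc); have := ler_wpM2l l1' (gi b c Cc).
    lra.
  - exact: gball.
  - move=> y s hs.
    have sq : q y <= s.
      case: (pselect (A y)) => [Ay|nAy].
        by have := hs y Ay; rewrite /= bl_self; lra.
      have [a [Aa ha]] : exists a, A a /\ q (y - a) < 0.
        apply: contrapT => hne; apply: nAy; apply: Amax => a Aa.
        rewrite leNgt; apply/negP => hlt; apply: hne; by exists a.
      have := hs a Aa; have := qfB hB y a; rewrite /=; lra.
    have gq : - q y <= g y.
      case: (pselect (C (- y))) => [Cy|nCy].
        have := gi y (- y) Cy; rewrite (ssd_Nr hB) bl_self (qfN hB); lra.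
      have [c [Cc hc]] : exists c, C c /\ - q (- y - c) < 0.
        apply: contrapT => hne; apply: nCy; apply: Cmax => c Cc.
        rewrite leNgt; apply/negP => hlt; apply: hne; by exists c.
      move: hc; rewrite -opprD (qfN hB) (qfD hB) => hc.
      have := gi y c Cc; lra.
    lra.
have H : forall a c, A a -> C c -> q (c0 + c) <= q (c0 - a).
  move=> a c Aa Cc.
  have hg : g (- c) <= - q c.
    apply: gii => c' Cc'.
    have := Cpos _ _ Cc' Cc; rewrite (qfB hB) (ssd_Nl hB) (ssd_sym hB c c'); lra.
  have := hc a (q a) (- c) (EA a Aa).
  rewrite (qfD hB) (qfB hB) (ssd_Nl hB) (ssd_sym hB a) (ssd_sym hB c); lra.
have Ac0 : A c0.
  apply: Amax => a Aa; rewrite leNgt; apply/negP => hlt.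
  have Cm : C (- c0).
    apply: Cmax => c Cc; have := H a c Aa Cc.
    rewrite -opprD (qfN hB); lra.
  by have := H a (- c0) Aa Cm; rewrite subrr (qf0 hB); lra.
exists c0; split => //.
apply: Cmax => c Cc; rewrite leNgt; apply/negP => hlt.
move: hlt; rewrite -opprD (qfN hB) => hlt.
by have := H c0 c Ac0 Cc; rewrite subrr (qf0 hB); lra.
Qed.

Lemma core (A C : set B) : maxQpositive q A -> maxQpositive (fun b => - q b) C ->
  (forall x, Phi_mq bl C x \is a fin_num) -> setsum A C = setT.
Proof.
move=> hA hC hfin.
have [[A0 Apos] Amax] := max_to_prop (qfN hB) (qf0 hB) hA.
have mC : maxprop (fun b => - q b) C.
  apply: max_to_prop hC => [x|]; by rewrite ?(qfN hB) ?(qf0 hB) ?oppr0.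
apply/seteqP; split => // x _.
pose A' := fun y => A (y + x).
have mA' : maxprop q A'.
  split; first split.
  - by case: A0 => a Aa; exists (a - x); rewrite /A' subrK.
  - move=> y1 y2 h1 h2; have := Apos _ _ h1 h2.
    by rewrite opprD addrACA subrr addr0.
  - move=> b hb; apply: Amax => a Aa.
    have := hb (a - x); rewrite /A' subrK => /(_ Aa).
    by rewrite opprB addrA.
have [c0 [Ac0 Cc0]] := core0 mA' mC hfin.
exists (c0 + x) => //; exists (- c0) => //.
by rewrite addrAC subrr add0r.
Qed.
End core.

Unset Implicit Arguments.

Theorem mainTheorem14 (R : realType) (B : completeNormedModType R)
  (bl : B -> B -> R) (hB : SSDB bl) (A : set B)
  (hA : Qpositive (qf bl) A) :
  (maxQpositive (qf bl) A <->
     (forall C : set B, maxQpositive (fun b => - qf bl b) C ->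
        (forall x : B, Phi_mq bl C x \is a fin_num) ->
        setsum A C = setT)) /\
  (maxQpositive (qf bl) A <->
     (exists (C : set B) (p : B), setsum A C = setT /\ C p /\
        (forall z : B, C z -> z <> p -> qf bl (z - p) < 0))).
Proof.
split; split.
- by move=> hmax C hC hfin; apply: (core hB).
- move=> h2; apply: prop_to_max.
  apply: (three_to_one (C := C0 bl) (p := 0) hA).
  + apply: h2; [exact: prop_to_max (C0_max hB) | exact: C0_fin hB].
  + exact: C0_0 hB.
  + exact: C0_strict.
- move=> hmax; exists (C0 bl), 0; split.
    apply: (core hB) => //; [exact: prop_to_max (C0_max hB) | exact: C0_fin hB].
  by split; [exact: C0_0 hB | exact: C0_strict].
- move=> [C [p [sAC [Cp st]]]]; apply: prop_to_max.
  exact: three_to_one hA sAC Cp st.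
Qed.
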